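(* Let $G$ be a finite group with conjugacy classes $\mathcal{C}_1,\dots,\mathcal{C}_s$, let $r\geq 2$ be a prime, and let $g\in G\wr S_n$ have type $T(g)=(T(g)_{ij})_{s\times n}$. Then for $1\le i\le s$, $1\le j\le n$, $$T(g^r)_{i,j}=\begin{cases}\sum_{z=1}^{m}T(g)_{y_z,j}+rT(g)_{i,rj} & \text{if } r\nmid j,\\ rT(g)_{i,rj} & \text{if } r\mid j,\end{cases}$$ where $\{y_1,\dots,y_m\}\subseteq\{1,\dots,s\}$ is the set of all indices $k$ with $(\mathcal{C}_k)^r=\mathcal{C}_i$, and by convention $T(g)_{i,rj}=0$ when $rj>n$.
   Context: $G\wr S_n$ is the set of pairs $(f,\pi)$ with $f:\{1,\dots,n\}\to G$ and $\pi\in S_n$, with product $(f,\pi)(f',\pi')=(ff'_\pi,\pi\pi')$, $f'_\pi(i)=f'(\pi^{-1}(i))$, pointwise product of functions. For $(f,\pi)$ and a cycle $(j,\pi(j),\dots,\pi^t(j))$ of $\pi$, its cycle product is $f(j)f(\pi^{-1}(j))\cdots f(\pi^{-t}(j))$; its conjugacy class is independent of the starting point. The type $T(g)$ of $g=(f,\pi)$ is the $s\times n$ matrix whose $(i,k)$ entry is the number of $k$-cycles of $\pi$ whose cycle product lies in $\mathcal{C}_i$. For a conjugacy class $\mathcal{C}$ of $G$, $(\mathcal{C})^r=\{x^r: x\in\mathcal{C}\}$, which is again a conjugacy class of $G$. *)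

(* Defs.v *)
From mathcomp Require Import all_boot all_fingroup.
Set Implicit Arguments. Unset Strict Implicit. Unset Printing Implicit Defensive.
Local Open Scope group_scope.

Section Wreath.
Variables (gT : finGroupType) (n : nat).

Definition wreath := ({ffun 'I_n -> gT} * {perm 'I_n})%type.

(* The paper composes permutations as functions (pi pi')(i) = pi(pi'(i)),
   which in MathComp (where (s * t) x = t (s x)) is pi' * pi. *)
Definition wmul (g h : wreath) : wreath :=
  ([ffun i => g.1 i * h.1 ((g.2)^-1 i)], h.2 * g.2).

Definition wone : wreath := ([ffun => 1], 1).

Definition wpow (g : wreath) (r : nat) : wreath := iter r (wmul g) wone.

Definition cycprod (g : wreath) (j : 'I_n) : gT :=
  \prod_(k < #|porbit g.2 j|) g.1 ((g.2^-1 ^+ k)%g j).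

(* T(g)_{C,k}: number of k-cycles of pi whose cycle product lies in C
   (the conjugacy class of the cycle product is independent of the start). *)
Definition wtype (g : wreath) (C : {set gT}) (k : nat) : nat :=
  #|[set O in porbits g.2 | (#|O| == k) &&
        [exists j in O, cycprod g j \in C]]|.

End Wreath.

Definition class_pow (gT : finGroupType) (C : {set gT}) (r : nat) : {set gT} :=
  [set x ^+ r | x in C].

(* Main.v *)
Require Import Defs.
From mathcomp Require Import all_boot all_fingroup.
Set Implicit Arguments. Unset Strict Implicit. Unset Printing Implicit Defensive.


Section Orb.
Local Open Scope group_scope.
Variable T : finType.
Implicit Types (s : {perm T}) (x : T).

Lemma porbit_fix s x m : ((s ^+ m) x == x) = (#|porbit s x| %| m).
Proof.
set k := #|porbit s x|.
have k0 : 0 < k by rewrite lt0n card_porbit_neq0.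
have Hk : (s ^+ k) x = x by rewrite permX iter_porbit.
have Hq q : (s ^+ (k * q)) x = x by rewrite expgM permX_fix.
rewrite {1}(divn_eq m k) mulnC expgD permM Hq /dvdn.
have : m %% k < k by rewrite ltn_mod.
move: (m %% k) => i ik.
have U := uniq_traject_porbit s x; rewrite -/k in U.
have sz : size (traject s x k) = k by rewrite size_traject.
rewrite permX -(nth_traject s ik) -[x in _ == x](nth_traject s k0).
by rewrite (nth_uniq x _ _ U) ?sz.
Qed.

Lemma porbit_card_eq s x d : (forall m, ((s ^+ m) x == x) = (d %| m)) ->
  #|porbit s x| = d.
Proof.
move=> H; apply/eqP; rewrite eqn_dvd -porbit_fix H dvdnn /=.
by rewrite -H porbit_fix.
Qed.
End Orb.


Section Orb2.
Local Open Scope group_scope.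
Variable T : finType.
Implicit Types (s : {perm T}) (x : T).

Lemma count_orbits s (P : pred T) k :
  (forall x y, y \in porbit s x -> P y = P x) ->
  #|[set x | (#|porbit s x| == k) && P x]| =
  (k * #|[set O in porbits s | (#|O| == k) && [exists y in O, P y]]|)%N.
Proof.
move=> HP; rewrite mulnC; apply: card_uniform_partition.
  by move=> O; rewrite inE => /andP[_ /andP[/eqP ->]].
apply/and3P; split.
- apply/eqP/setP => x; rewrite inE; apply/bigcupP/idP.
    case=> O; rewrite inE => /andP[/imsetP[z _ ->] /andP[/eqP kz /existsP[y /andP[yO Py]]]] xO.
    have ex : porbit s x = porbit s z by apply/eqP; rewrite eq_porbit_mem.
    by rewrite ex kz eqxx /= (HP z x xO) -(HP z y yO).
  move=> /andP[/eqP kx Px]; exists (porbit s x); last exact: porbit_id.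
  rewrite inE imset_f // kx eqxx /=; apply/existsP; exists x.
  by rewrite porbit_id Px.
- apply/trivIsetP => A B; rewrite !inE => /andP[/imsetP[a _ ->] _] /andP[/imsetP[b _ ->] _] neq.
  rewrite -setI_eq0; apply/eqP/setP => z; rewrite !inE; apply/negP => /andP[za zb].
  case/negP: neq.
  have ea : porbit s z = porbit s a by apply/eqP; rewrite eq_porbit_mem.
  have eb : porbit s z = porbit s b by apply/eqP; rewrite eq_porbit_mem.
  by rewrite -ea -eb.
- apply/negP; rewrite inE => /andP[/imsetP[z _ ez] _].
  by have := porbit_id s z; rewrite -ez inE.
Qed.
End Orb2.


Section W.
Local Open Scope group_scope.
Variables (gT : finGroupType) (n : nat).
Implicit Types (g : wreath gT n).

Lemma wpow_eq g r : wpow g r =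
  ([ffun i => \prod_(l < r) g.1 ((g.2^-1 ^+ l) i)], g.2 ^+ r).
Proof.
elim: r => [|r IH].
  by rewrite /wpow /= /wone; congr pair; apply/ffunP => i; rewrite !ffunE big_ord0.
rewrite /wpow iterS -/(wpow g r) IH /wmul /=; congr pair; last by rewrite expgSr.
apply/ffunP => i; rewrite !ffunE big_ord_recl.
rewrite expg0 perm1.
congr (_ * _).
by apply: eq_bigr => l _; rewrite expgS permM.
Qed.

Lemma inv_fix (p : {perm 'I_n}) y m : #|porbit p y| %| m -> (p^-1 ^+ m) y = y.
Proof. by move=> H; apply/eqP; rewrite porbit_fix porbitV. Qed.

Lemma cycprod_conj g y : cycprod g (g.2^-1 y) = cycprod g y ^ g.1 y.
Proof.
set p := g.2.
have pm : #|porbit p (p^-1 y)| = #|porbit p y|.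
  by rewrite -(porbitV p (p^-1 y)) -(porbitV p y) -{2}(expg1 p^-1) porbit_perm.
rewrite /cycprod -/p pm.
have := inv_fix (dvdnn #|porbit p y|).
have := card_porbit_neq0 p y.
case: #|porbit p y| => [//|m0] _ Hm.
rewrite big_ord_recr big_ord_recl expg0 perm1 -permM -expgS Hm.
rewrite /conjg -mulgA mulKg; congr (_ * _).
by apply: eq_bigr => k _; rewrite -permM -expgS.
Qed.

Lemma cycprod_orbit g x y : y \in porbit g.2 x -> exists h, cycprod g y = cycprod g x ^ h.
Proof.
rewrite -porbitV => /porbitP[i ->]; elim: i => [|i [h IH]].
  by exists 1; rewrite expg0 perm1 conjg1.
exists (h * g.1 ((g.2^-1 ^+ i) x)).
by rewrite expgSr permM cycprod_conj IH conjgM.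
Qed.

Lemma cycprod_class g C x y : C \in classes [set: gT] -> y \in porbit g.2 x ->
  (cycprod g y \in C) = (cycprod g x \in C).
Proof.
case/imsetP => a _ -> /cycprod_orbit[h ->].
by apply: class_transl; apply: memJ_class; rewrite inE.
Qed.

Lemma prod_flat (h : nat -> gT) m r :
  \prod_(k < m) \prod_(l < r) h (k * r + l)%N = \prod_(t < m * r) h t.
Proof.
elim: m => [|m IH]; first by rewrite !big_ord0.
by rewrite big_ord_recr IH mulSnr big_split_ord.
Qed.

Lemma prod_period (h : nat -> gT) k a : (forall t, h (t + k)%N = h t) ->
  \prod_(t < a * k) h t = (\prod_(t < k) h t) ^+ a.
Proof.
move=> Hp.
have Hq t b : h (b * k + t)%N = h t.
  elim: b => [|b IHb]; first by rewrite mul0n add0n.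
  by rewrite mulSnr -addnA [(k + t)%N]addnC addnA Hp IHb.
elim: a => [|a IH]; first by rewrite big_ord0 expg0.
rewrite mulSnr big_split_ord IH expgSr; congr (_ * _).
by apply: eq_bigr => i _ /=; rewrite Hq.
Qed.

Lemma cycprod_wpow g r x : cycprod (wpow g r) x =
  \prod_(t < #|porbit (g.2 ^+ r) x| * r) g.1 ((g.2^-1 ^+ t) x).
Proof.
rewrite wpow_eq /cycprod; cbn [fst snd]; rewrite -(prod_flat (fun t => g.1 ((g.2^-1 ^+ t) x))); apply: eq_bigr => k _.
rewrite ffunE; apply: eq_bigr => l _.
by rewrite expgD permM -expgVn -expgM mulnC.
Qed.

End W.


Section W2.
Local Open Scope group_scope.
Variables (gT : finGroupType) (n : nat).
Implicit Types (g : wreath gT n).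

Lemma cyc_period g x t : g.1 ((g.2^-1 ^+ (t + #|porbit g.2 x|)) x) = g.1 ((g.2^-1 ^+ t) x).
Proof. by rewrite addnC expgD permM (inv_fix (dvdnn _)). Qed.

Lemma wpow_ndvd g r x : prime r -> ~~ (r %| #|porbit g.2 x|) ->
  #|porbit (g.2 ^+ r) x| = #|porbit g.2 x| /\ cycprod (wpow g r) x = cycprod g x ^+ r.
Proof.
move=> pr nd.
have E : #|porbit (g.2 ^+ r) x| = #|porbit g.2 x|.
  apply: porbit_card_eq => m; rewrite -expgM porbit_fix Gauss_dvdr //.
  by rewrite coprime_sym prime_coprime.
split=> //; rewrite cycprod_wpow E mulnC /cycprod.
by rewrite (@prod_period _ (fun t => g.1 ((g.2^-1 ^+ t) x)) _ r (cyc_period g x)).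
Qed.

Lemma wpow_dvd g r x : prime r -> r %| #|porbit g.2 x| ->
  #|porbit (g.2 ^+ r) x| = #|porbit g.2 x| %/ r /\ cycprod (wpow g r) x = cycprod g x.
Proof.
move=> pr d.
have r0 : 0 < r by apply: prime_gt0.
have E : #|porbit (g.2 ^+ r) x| = #|porbit g.2 x| %/ r.
  apply: porbit_card_eq => m; rewrite -expgM porbit_fix.
  by rewrite -{1}(divnK d) mulnC dvdn_pmul2l.
by split=> //; rewrite cycprod_wpow E divnK.
Qed.

End W2.


Section Cls.
Local Open Scope group_scope.
Variable gT : finGroupType.

Lemma card_sum (T : finType) (A : {set T}) : #|A| = (\sum_x (x \in A : nat))%N.
Proof.
rewrite -sum1_card big_mkcond /=; apply: eq_bigr => x _.
by case: (x \in A).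
Qed.

Lemma class_pow_class (c : gT) r : class_pow (c ^: [set: gT]) r = (c ^+ r) ^: [set: gT].
Proof.
rewrite /class_pow; apply/setP => y; apply/imsetP/imsetP.
  by case=> z /imsetP[h _ ->] ->; exists h => //; rewrite conjXg.
case=> h _ ->; exists (c ^ h); first by apply: memJ_class; rewrite inE.
by rewrite conjXg.
Qed.

Lemma class_eq_mem (C : {set gT}) b : C \in classes [set: gT] ->
  (b ^: [set: gT] == C) = (b \in C).
Proof. by case/imsetP => a _ ->; apply/eqP/class_eqP. Qed.

Lemma sum_classes (T : finType) (c : T -> gT) (b : pred T) r C :
  C \in classes [set: gT] ->
  #|[set x | b x && (c x ^+ r \in C)]| =
  (\sum_(D in classes [set: gT] | class_pow D r == C) #|[set x | b x && (c x \in D)]|)%N.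
Proof.
move=> HC; symmetry.
under eq_bigr do rewrite card_sum.
rewrite card_sum exchange_big /=; apply: eq_bigr => x _.
under eq_bigr do rewrite inE.
rewrite inE; symmetry.
case: (b x) => /=; last by rewrite big1.
case: (boolP (c x ^+ r \in C)) => H.
  rewrite (bigD1 (c x ^: [set: gT])) /=; last first.
    by rewrite mem_classes ?inE //= class_pow_class class_eq_mem.
  rewrite class_refl big1 //.
  move=> D /andP[/andP[/imsetP[a _ ->] _] ne]; apply/eqP; rewrite eqb0.
  apply: contra ne => cin; rewrite eq_sym; by apply/eqP/class_eqP.
symmetry; apply: big1 => D /andP[/imsetP[a _ ->] /eqP e]; apply/eqP; rewrite eqb0.
apply: contra H => cin; rewrite -e.
have -> : a ^: [set: gT] = c x ^: [set: gT] by apply/esym/class_eqP.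
by rewrite class_pow_class class_refl.
Qed.
End Cls.

Unset Implicit Arguments. Set Strict Implicit.


Theorem lemma4p2 (gT : finGroupType) (n r : nat) (g : wreath gT n) :
  prime r ->
  forall C : {set gT}, C \in classes [set: gT] ->
  forall j : nat, 1 <= j <= n ->
    wtype (wpow g r) C j =
      (if ~~ (r %| j)
       then \sum_(D in classes [set: gT] | class_pow D r == C) wtype g D j
              + r * wtype g C (r * j)
       else r * wtype g C (r * j)).
Proof.
move=> pr C HC j /andP[j1 _].
have cnt : forall (h : wreath gT n) D k, D \in classes [set: gT] ->
    #|[set x | (#|porbit h.2 x| == k) && (cycprod h x \in D)]| = k * wtype h D k.
  move=> h D k HD; apply: (@count_orbits _ h.2 (fun x => cycprod h x \in D) k).
  by move=> x y yx; apply: cycprod_class.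
have Wp : (wpow g r).2 = (g.2 ^+ r)%g by rewrite wpow_eq.
apply/eqP; rewrite -(eqn_pmul2l j1) -cnt // Wp.
rewrite -(cardsID [set x | r %| #|porbit g.2 x|]).
have E1 : [set x | (#|porbit (g.2 ^+ r)%g x| == j) && (cycprod (wpow g r) x \in C)]
      :&: [set x | r %| #|porbit g.2 x|] =
    [set x | (#|porbit g.2 x| == r * j) && (cycprod g x \in C)].
  apply/setP => x; rewrite !inE; case: (boolP (r %| #|porbit g.2 x|)) => d.
    have [E F] := @wpow_dvd _ _ g r x pr d.
    by rewrite E F andbT eq_sym eqn_div ?prime_gt0 // eq_sym mulnC.
  rewrite andbF; symmetry; apply/negbTE; apply: contra d => /andP[/eqP -> _].
  exact: dvdn_mulr.
have E2 : [set x | (#|porbit (g.2 ^+ r)%g x| == j) && (cycprod (wpow g r) x \in C)]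
      :\: [set x | r %| #|porbit g.2 x|] =
    [set x | ((#|porbit g.2 x| == j) && ~~ (r %| j)) && ((cycprod g x ^+ r)%g \in C)].
  apply/setP => x; rewrite !inE; case: (boolP (r %| #|porbit g.2 x|)) => d /=.
    symmetry; apply/negbTE; apply/negP => /andP[/andP[/eqP kj nd] _].
    by rewrite -kj d in nd.
  have [E F] := @wpow_ndvd _ _ g r x pr d.
  rewrite E F; case: eqP => //= kj; by rewrite -kj d.
rewrite E1 E2 cnt //.
case: ifP => nd; apply/eqP.
  have -> : [set x : 'I_n | ((#|porbit g.2 x| == j) && true) && ((cycprod g x ^+ r)%g \in C)]
     = [set x : 'I_n | (#|porbit g.2 x| == j) && ((cycprod g x ^+ r)%g \in C)].
    by apply/setP => x; rewrite !inE andbT.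
  rewrite (sum_classes (fun x => cycprod g x) (fun x => #|porbit g.2 x| == j)) //.
  rewrite mulnDr big_distrr /= addnC.
  congr (_ + _); last by rewrite mulnA (mulnC r j).
  by apply: eq_bigr => D /andP[HD _]; rewrite cnt.
have -> : #|[set x : 'I_n | ((#|porbit g.2 x| == j) && false) && ((cycprod g x ^+ r)%g \in C)]| = 0.
  by apply: eq_card0 => x; rewrite inE andbF.
by rewrite addn0 mulnA (mulnC r j).
Qed.
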